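(* Let $a,a^{+}$ be boson operators with $aa^{+}-a^{+}a=1$, let $m\in\mathbb{N}$, $r\ge0$, and let $\lambda$ be a nonzero real number. For all integers $l,n\ge0$, \[ (m\,a^{+}a+r)_{l+n,\lambda}=\sum_{j=0}^{l}\sum_{k=0}^{n}W^{(r)}_{m,\lambda}(l,j)\binom{n}{k}m^{j}(a^{+})^{j}(mj-l\lambda)_{n-k,\lambda}\,(m\,a^{+}a+r)_{k,\lambda}\,a^{j}. \]
   Context: For an operator or number $X$ and real $\lambda\neq0$, $(X)_{0,\lambda}=1$ and $(X)_{n,\lambda}=X(X-\lambda)\cdots(X-(n-1)\lambda)$ for $n\ge1$ (scalars mean multiples of the identity); $(x)_k=x(x-1)\cdots(x-k+1)$. For $m\in\mathbb{N}$ and $r\ge0$, the degenerate $r$-Whitney numbers of the second kind $W^{(r)}_{m,\lambda}(n,k)$ are defined by $(mx+r)_{n,\lambda}=\sum_{k=0}^{n}W^{(r)}_{m,\lambda}(n,k)m^{k}(x)_k$ ($n\ge0$). *)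

(* Defs.v *)
From mathcomp Require Import all_boot all_order all_algebra.
From mathcomp Require Import reals.
Set Implicit Arguments. Unset Strict Implicit. Unset Printing Implicit Defensive.
Import Order.TTheory GRing.Theory Num.Theory.
Local Open Scope ring_scope.

Definition dfall (T : pzRingType) (X lam : T) (n : nat) : T :=
  \prod_(i < n) (X - i%:R * lam).

(* Main.v *)
Require Import Defs.
From mathcomp Require Import all_boot all_order all_algebra.
From mathcomp Require Import reals.
From mathcomp Require Import ring.
Import Order.TTheory GRing.Theory Num.Theory.
Local Open Scope ring_scope.

Lemma dfallS (T : pzRingType) (X lam : T) n :
  dfall X lam n.+1 = dfall X lam n * (X - n%:R * lam).
Proof. by rewrite /dfall big_ord_recr. Qed.

Lemma dfall0 (T : pzRingType) (X lam : T) : dfall X lam 0 = 1.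
Proof. by rewrite /dfall big_ord0. Qed.

Lemma dfall_add (T : pzRingType) (X lam : T) l n :
  dfall X lam (l + n) = dfall X lam l * dfall (X - l%:R * lam) lam n.
Proof.
rewrite /dfall big_split_ord /=; congr (_ * _); apply: eq_bigr => i _.
by rewrite natrD mulrDl opprD addrA.
Qed.

Lemma rmorph_dfall (S T : pzRingType) (f : {rmorphism S -> T}) (X lam : S) n :
  f (dfall X lam n) = dfall (f X) (f lam) n.
Proof.
rewrite /dfall rmorph_prod; apply: eq_bigr => i _.
by rewrite rmorphB rmorphM rmorph_nat.
Qed.

Lemma dfall_binom (T : comPzRingType) (x y lam : T) n :
  dfall (x + y) lam n =
  \sum_(k < n.+1) 'C(n, k)%:R * dfall y lam (n - k) * dfall x lam k.
Proof.
elim: n => [|n IH].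
  by rewrite big_ord_recl big_ord0 !dfall0 addr0 !mulr1.
rewrite dfallS IH big_distrl /=.
have E : forall k : 'I_n.+1,
   'C(n, k)%:R * dfall y lam (n - k) * dfall x lam k * (x + y - n%:R * lam)
   = 'C(n, k)%:R * dfall y lam (n - k) * dfall x lam k.+1
   + 'C(n, k)%:R * dfall y lam (n - k).+1 * dfall x lam k.
  move=> k; rewrite !dfallS.
  have -> : n%:R = (n - k)%:R + k%:R :> T by rewrite -natrD subnK // -ltnS.
  ring.
rewrite (eq_bigr _ (fun k _ => E k)) big_split /=.
rewrite [in RHS]big_ord_recl /= bin0 subn0 mul1r dfall0 mulr1.
under [in RHS]eq_bigr => k _ do
  rewrite /bump /= add1n binS natrD !mulrDl subSS.
rewrite big_split /= [RHS]addrA [RHS]addrC; congr (_ + _).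
have -> : \sum_(k < n.+1) 'C(n, k)%:R * dfall y lam (n - k).+1 * dfall x lam k
  = \sum_(k < n.+2) 'C(n, k)%:R * dfall y lam (n.+1 - k) * dfall x lam k.
  rewrite [in RHS]big_ord_recr /= bin_small // mul0r mul0r addr0.
  by apply: eq_bigr => k _; rewrite subSn // -ltnS.
rewrite big_ord_recl /= bin0 subn0 mul1r dfall0 mulr1.
by congr (_ + _); apply: eq_bigr => k _; rewrite /bump /= add1n subSS.
Qed.

Lemma poly_eq_all (R : realType) (p q : {poly R}) :
  (forall x, p.[x] = q.[x]) -> p = q.
Proof.
move=> H; apply/eqP; rewrite -subr_eq0; apply/eqP.
apply: (@roots_geq_poly_eq0 _ _ [seq i%:R | i <- iota 0 (size (p - q))]).
- by apply/allP => x _; rewrite /root hornerD hornerN H subrr.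
- by rewrite map_inj_uniq ?iota_uniq // => i j /eqP; rewrite eqr_nat => /eqP.
- by rewrite size_map size_iota.
Qed.

Lemma Wexpand (R : realType) (A : algType R) (N : A) (m : nat) (r lam : R)
  (W : nat -> nat -> R)
  (HW : forall (n : nat) (x : R),
     dfall (m%:R * x + r) lam n
     = \sum_(k < n.+1) W n k * m%:R ^+ k * dfall x 1 k) (l : nat) :
  dfall (m%:R * N + r%:A) lam%:A l
  = \sum_(k < l.+1) (W l k * m%:R ^+ k)%:A * dfall N 1 k.
Proof.
pose P : {poly R} := dfall (m%:R * 'X + r%:P) lam%:P l.
pose Q : {poly R} := \sum_(k < l.+1) (W l k * m%:R ^+ k)%:P * dfall 'X 1 k.
have PQ : P = Q.
  apply: poly_eq_all => x.
  rewrite /P /Q -!horner_evalE rmorph_dfall rmorph_sum /= !horner_evalE.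
  rewrite !hornerE hornerMn hornerC HW; apply: eq_bigr => k _.
  by rewrite rmorphM /= rmorph_dfall /= !horner_evalE !hornerE.
have := congr1 (horner_alg N) PQ.
rewrite /P /Q rmorph_dfall rmorph_sum /= rmorphD rmorphM /= rmorph_nat.
rewrite !horner_algC horner_algX => ->.
apply: eq_bigr => k _; rewrite rmorphM /= horner_algC rmorph_dfall /=.
by rewrite horner_algX rmorph1.
Qed.

Lemma dfall_alg (R : realType) (A : algType R) (c lam : R) k :
  dfall c%:A lam%:A k = (dfall c lam k)%:A :> A.
Proof.
elim: k => [|k IH]; first by rewrite !dfall0 scale1r.
rewrite !dfallS IH mulr_algl -scalerA; congr (_ *: _).
by rewrite scalerBl -scalerA scaler_nat mulr_natl.
Qed.

Lemma aad_lem (R : realType) (A : algType R) (a ad : A)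
  (Hboson : a * ad - ad * a = 1) : a * ad = 1 + ad * a.
Proof. by move/eqP: Hboson; rewrite subr_eq => /eqP. Qed.

Lemma Na_pow (R : realType) (A : algType R) (a ad : A) (Hboson : a * ad - ad * a = 1) j : (ad * a) * a ^+ j = a ^+ j * (ad * a - j%:R).
Proof.
elim: j => [|j IH]; first by rewrite expr0 mulr1 mul1r subr0.
have aad := @aad_lem _ _ _ _ Hboson.
have Na1 : (ad * a) * a = a * (ad * a - 1).
  by rewrite mulrBr mulr1 mulrA aad mulrDl mul1r addrAC subrr add0r.
rewrite exprS mulrA Na1 -mulrA mulrBl IH mul1r mulrBr !mulrA.
by rewrite -natr1 opprD addrA [in RHS]mulrBr mulr1.
Qed.

Lemma aN_pow (R : realType) (A : algType R) (a ad : A) (Hboson : a * ad - ad * a = 1) j : a ^+ j * (ad * a) = (ad * a + j%:R) * a ^+ j.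
Proof.
elim: j => [|j IH]; first by rewrite expr0 mulr1 mul1r addr0.
have aad := @aad_lem _ _ _ _ Hboson.
have aN1 : a * (ad * a) = (ad * a + 1) * a.
  by rewrite mulrA aad addrC.
rewrite exprS -mulrA IH mulrA mulrDr aN1 (commr_nat a) -mulrDl -mulrA.
by rewrite -addrA (addrC 1) natr1.
Qed.

Lemma normal_ord (R : realType) (A : algType R) (a ad : A) (Hboson : a * ad - ad * a = 1) j : ad ^+ j * a ^+ j = dfall (ad * a) 1 j.
Proof.
elim: j => [|j IH]; first by rewrite !expr0 mulr1 dfall0.
rewrite dfallS exprSr exprS -mulrA (mulrA ad) (@Na_pow _ _ _ _ Hboson).
by rewrite mulrA IH mulr1.
Qed.

Lemma shift_poly (R : realType) (A : algType R) (a ad : A) (Hboson : a * ad - ad * a = 1) j (p : {poly R}) :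
  a ^+ j * horner_alg (ad * a) p = horner_alg (ad * a + j%:R) p * a ^+ j.
Proof.
elim/poly_ind: p => [|p c IH]; first by rewrite !rmorph0 mulr0 mul0r.
rewrite !rmorphD !rmorphM /= !horner_algX !horner_algC.
rewrite mulrDr mulrA IH -mulrA (@aN_pow _ _ _ _ Hboson) mulrA mulrDl.
by rewrite comm_alg.
Qed.


Theorem mainTheorem8 (R : realType) (A : algType R) (a ad : A)
  (m : nat) (r lam : R) (W : nat -> nat -> R)
  (Hboson : a * ad - ad * a = 1)
  (Hr : 0 <= r) (Hlam : lam != 0)
  (HW : forall (n : nat) (x : R),
     dfall (m%:R * x + r) lam n
     = \sum_(k < n.+1) W n k * m%:R ^+ k * dfall x 1 k)
  (l n : nat) :
  dfall (m%:R * (ad * a) + r%:A) lam%:A (l + n)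
  = \sum_(j < l.+1) \sum_(k < n.+1)
      (W l j)%:A * ('C(n, k))%:R * (m ^ j)%:R * ad ^+ j
      * (dfall (m%:R * j%:R - l%:R * lam) lam (n - k))%:A
      * dfall (m%:R * (ad * a) + r%:A) lam%:A k * a ^+ j.
Proof.
rewrite dfall_add (@Wexpand R A (ad * a) m r lam W HW l) big_distrl /=.
apply: eq_bigr => j _.
pose y := m%:R * j%:R - l%:R * lam.
pose q : {poly R} := dfall (m%:R * 'X + (r - l%:R * lam)%:P) lam%:P n.
pose q' : {poly R} := dfall ((m%:R * 'X + r%:P) + y%:P) lam%:P n.
have hD : dfall (m%:R * (ad * a) + r%:A - l%:R * lam%:A) lam%:A n
          = horner_alg (ad * a) q.
  rewrite /q rmorph_dfall /= rmorphD rmorphM /= rmorph_nat !horner_algC horner_algX.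
  by rewrite scalerBl -scalerA scaler_nat -[lam%:A *+ l]mulr_natl addrA.
have hq : horner_alg (ad * a + j%:R) q = horner_alg (ad * a) q'.
  rewrite /q /q' !rmorph_dfall /= !rmorphD !rmorphM /= !rmorph_nat !horner_algC.
  by rewrite !horner_algX mulrDr addrACA.
rewrite -(@normal_ord R A a ad Hboson j) hD -!mulrA (@shift_poly R A a ad Hboson j q) hq.
rewrite /q' dfall_binom rmorph_sum /= big_distrl !big_distrr /=.
apply: eq_bigr => k _.
rewrite !rmorphM /= rmorph_nat !rmorph_dfall /= !horner_algC rmorphD rmorphM /=.
rewrite rmorph_nat horner_algX horner_algC dfall_alg.
set D := dfall _ _ k; set u := ad ^+ j; set v := a ^+ j.
have nA : forall t : nat, (t%:R : A) = (t%:R : R)%:A by move=> t; rewrite scaler_nat.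
rewrite !nA.
do 8 (rewrite -?scalerAl -?scalerAr ?mul1r ?mulr1 ?scalerA).
rewrite !mulrA /y; congr (_ *: _).
rewrite natrX; ring.
Qed.
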